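(* Let $p$ be an odd prime and $x$ a $p$-adic integer. Let $m\in\{0,\ldots,p-1\}$ be the least nonnegative residue of $x$ modulo $p$, put $t=(x-m)/p$, and suppose $m<(p-1)/2$. Then $$ p\sum_{j=0}^m\sum_{k=p-m}^{p-1}\binom{x}{j}\binom{x+j}{j}\binom{x}{k}\binom{x+k}{k}\sum_{n=0}^{j+k}\frac{1}{n+1}\binom{n}{j}\binom{j}{n-k}\binom{p-1}{n} \equiv \frac{p^2t(t+1)(-1)^mH_{2m}}{2m+1}\pmod{p^3}. $$
   Context: For a $p$-adic integer $y$ and an integer $k$, $\binom{y}{k}=y(y-1)\cdots(y-k+1)/k!$ if $k\geq0$ and $\binom{y}{k}=0$ if $k<0$. $H_n=\sum_{i=1}^n1/i$. Congruences between $p$-adic numbers modulo $p^3$ mean the difference divided by $p^3$ is a $p$-adic integer. *)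

(* Defs.v *)
From mathcomp Require Import all_boot all_order all_algebra.
Set Implicit Arguments. Unset Strict Implicit. Unset Printing Implicit Defensive.
Import Order.TTheory GRing.Theory Num.Theory.
Local Open Scope ring_scope.

(* Q_p is modelled as the completion of Q: a p-adic number is represented by a
   p-adically Cauchy sequence of rationals; arithmetic is termwise. *)

Definition in_pZ (p k : nat) (q : rat) : bool :=
  ((p ^ k)%N %| `|numq q|%N)%N && ~~ (p %| `|denq q|%N)%N.

Definition padic_cauchy (p : nat) (u : nat -> rat) : Prop :=
  forall k : nat, exists N : nat, forall n m : nat, (N <= n)%N -> (N <= m)%N ->
    in_pZ p k (u n - u m).

Definition padic_int (p : nat) (u : nat -> rat) : Prop :=
  padic_cauchy p u /\ exists N : nat, forall n : nat, (N <= n)%N -> in_pZ p 0 (u n).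

Definition padic_in_pZ (p k : nat) (u : nat -> rat) : Prop :=
  exists N : nat, forall n : nat, (N <= n)%N -> in_pZ p k (u n).

Definition binq (y : rat) (k : nat) : rat :=
  (\prod_(i < k) (y - i%:R)) / (k`!)%:R.

Definition harm (n : nat) : rat := \sum_(1 <= i < n.+1) (i%:R)^-1.

(* binom(j, n-k) with the convention binom(j, negative) = 0 *)
Definition binz (j n k : nat) : nat := if (k <= n)%N then 'C(j, n - k) else 0%N.

Definition lhs27 (p m : nat) (x : rat) : rat :=
  p%:R * \sum_(0 <= j < m.+1) \sum_(p - m <= k < p)
     (binq x j * binq (x + j%:R) j * binq x k * binq (x + k%:R) k *
      \sum_(0 <= n < (j + k).+1)
        ((n.+1)%:R^-1 * ('C(n, j))%:R * (binz j n k)%:R * ('C(p.-1, n))%:R)).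

Definition rhs27 (p m : nat) (x : rat) : rat :=
  let t := (x - m%:R) / p%:R in
  (p%:R)^+2 * t * (t + 1) * (-1)^+m * harm (2 * m) / (2 * m + 1)%:R.

(* Main.v *)
Require Import Defs.
From mathcomp Require Import all_boot all_order all_algebra.
From mathcomp Require Import zify ring lra.
Set Implicit Arguments. Unset Strict Implicit. Unset Printing Implicit Defensive.
Import Order.TTheory GRing.Theory Num.Theory.
Local Open Scope ring_scope.

Definition pint (p : nat) (q : rat) : bool := ~~ (p %| `|denq q|)%N.
Definition PZ (p k : nat) (q : rat) : Prop :=
  exists r, pint p r /\ q = (p%:R)^+k * r.

Lemma pint_frac p (n d : int) : ~~ (p %| `|d|)%N -> pint p (n%:~R / d%:~R).
Proof.
rewrite /pint; case: divqP => [d0|k x k0]; first by rewrite dvdn0.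
apply: contra => h; rewrite abszM; exact: dvdn_mull.
Qed.

Lemma pint_int p (z : int) : prime p -> pint p z%:~R.
Proof.
move=> pp; have -> : (z%:~R : rat) = z%:~R / (1%:~R) by rewrite divr1.
by apply: pint_frac; rewrite /= dvdn1; case: eqP pp => // ->.
Qed.

Lemma pint_nat p n : prime p -> pint p n%:R.
Proof. by move=> pp; have := pint_int n%:Z pp; rewrite pmulrn. Qed.

Lemma ratE (q : rat) : q = (numq q)%:~R / (denq q)%:~R.
Proof. by rewrite divq_num_den. Qed.

Lemma denq_ne0 (q : rat) : ((denq q)%:~R : rat) != 0.
Proof. by rewrite intr_eq0 denq_neq0. Qed.

Lemma pintD p a b : prime p -> pint p a -> pint p b -> pint p (a + b).
Proof.
move=> pp ha hb.
have -> : a + b = (numq a * denq b + numq b * denq a)%:~R / (denq a * denq b)%:~R.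
  rewrite {1}(ratE a) {1}(ratE b) intrD !intrM.
  by field; rewrite !denq_ne0.
apply: pint_frac; rewrite abszM Euclid_dvdM //; apply/norP; split; done.
Qed.

Lemma pintM p a b : prime p -> pint p a -> pint p b -> pint p (a * b).
Proof.
move=> pp ha hb.
have -> : a * b = (numq a * numq b)%:~R / (denq a * denq b)%:~R.
  rewrite {1}(ratE a) {1}(ratE b) !intrM.
  by field; rewrite !denq_ne0.
apply: pint_frac; rewrite abszM Euclid_dvdM //; apply/norP; split; done.
Qed.

Lemma pintN p a : pint p a -> pint p (- a).
Proof. by rewrite /pint denqN. Qed.

Lemma pintB p a b : prime p -> pint p a -> pint p b -> pint p (a - b).
Proof. by move=> pp ha hb; apply: pintD => //; apply: pintN. Qed.

Lemma pintX p a n : prime p -> pint p a -> pint p (a ^+ n).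
Proof.
move=> pp ha; elim: n => [|n IH]; first by rewrite expr0 (pint_nat 1 pp).
by rewrite exprS; apply: pintM.
Qed.

Lemma pintV_nat p n : ~~ (p %| n)%N -> pint p (n%:R^-1).
Proof.
move=> h; have -> : (n%:R^-1 : rat) = (1%:~R) / (n%:Z)%:~R by rewrite mul1r pmulrn.
by apply: pint_frac.
Qed.

Lemma pint_sum p I (r : seq I) (P : pred I) (F : I -> rat) : prime p ->
  (forall i, P i -> pint p (F i)) -> pint p (\sum_(i <- r | P i) F i).
Proof.
move=> pp h; apply: (big_ind (pint p)) => //; first exact: (pint_nat 0 pp).
by move=> *; apply: pintD.
Qed.

Lemma pint_prod p I (r : seq I) (P : pred I) (F : I -> rat) : prime p ->
  (forall i, P i -> pint p (F i)) -> pint p (\prod_(i <- r | P i) F i).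
Proof.
move=> pp h; apply: (big_ind (pint p)) => //; first exact: (pint_nat 1 pp).
by move=> *; apply: pintM.
Qed.

Lemma fact_ndvd p n : prime p -> (n < p)%N -> ~~ (p %| n`!)%N.
Proof.
move=> pp; elim: n => [|n IH] hn; first by rewrite fact0 dvdn1; case: eqP pp => // ->.
rewrite factS Euclid_dvdM // negb_or IH 1?andbT; last by apply: ltnW.
by apply/negP => /dvdn_leq => /(_ isT); rewrite leqNgt hn.
Qed.

Lemma pintVfact p n : prime p -> (n < p)%N -> pint p ((n`!)%:R^-1).
Proof. by move=> pp hn; apply: pintV_nat; apply: fact_ndvd. Qed.

Lemma PZ0 p k : prime p -> PZ p k 0.
Proof. by move=> pp; exists 0; rewrite mulr0; split => //; apply: (pint_nat 0 pp). Qed.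

Lemma PZD p k a b : prime p -> PZ p k a -> PZ p k b -> PZ p k (a + b).
Proof.
move=> pp [r [hr ->]] [s [hs ->]]; exists (r + s); rewrite mulrDr; split => //.
exact: pintD.
Qed.

Lemma PZN p k a : PZ p k a -> PZ p k (- a).
Proof. by move=> [r [hr ->]]; exists (- r); rewrite mulrN; split => //; apply: pintN. Qed.

Lemma PZB p k a b : prime p -> PZ p k a -> PZ p k b -> PZ p k (a - b).
Proof. by move=> pp ha hb; apply: PZD => //; apply: PZN. Qed.

Lemma PZM p k l a b : prime p -> PZ p k a -> PZ p l b -> PZ p (k + l) (a * b).
Proof.
move=> pp [r [hr ->]] [s [hs ->]]; exists (r * s); split; first exact: pintM.
by rewrite exprD; ring.
Qed.

Lemma PZ_pint p a : pint p a -> PZ p 0 a.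
Proof. by move=> h; exists a; rewrite expr0 mul1r. Qed.

Lemma PZMl p k a b : prime p -> pint p a -> PZ p k b -> PZ p k (a * b).
Proof. by move=> pp ha hb; have := PZM pp (PZ_pint ha) hb. Qed.

Lemma PZMr p k a b : prime p -> pint p a -> PZ p k b -> PZ p k (b * a).
Proof. by move=> pp ha hb; rewrite mulrC; apply: PZMl. Qed.

Lemma PZ_pX p k : prime p -> PZ p k (p%:R ^+ k).
Proof. by move=> pp; exists 1; rewrite mulr1; split => //; apply: (pint_nat 1 pp). Qed.

Lemma PZ_sum p k I (r : seq I) (P : pred I) (F : I -> rat) : prime p ->
  (forall i, P i -> PZ p k (F i)) -> PZ p k (\sum_(i <- r | P i) F i).
Proof.
move=> pp h; apply: (big_ind (PZ p k)) => //; first exact: PZ0.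
by move=> *; apply: PZD.
Qed.

Lemma PZ_nat p n : prime p -> (p %| n)%N -> PZ p 1 n%:R.
Proof.
move=> pp /dvdnP [q ->]; exists q%:R; rewrite expr1 natrM mulrC; split => //.
exact: pint_nat.
Qed.

Lemma inpZ_PZ p k q : prime p -> in_pZ p k q -> PZ p k q.
Proof.
move=> pp /andP [hn hd].
have : ((p ^ k)%N%:Z %| numq q)%Z by [].
move=> /dvdzP [c hc].
exists (c%:~R / (denq q)%:~R); split; first exact: pint_frac.
have e : (((p^k)%N%:Z)%:~R : rat) = (p^k)%N%:R by [].
rewrite {1}(ratE q) hc intrM e natrX.
ring.
Qed.

Lemma PZ_inpZ p k q : prime p -> PZ p k q -> in_pZ p k q.
Proof.
move=> pp [r [hr hq]]; rewrite /in_pZ.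
set N : int := ((p ^ k)%N%:Z * numq r).
have e : (((p^k)%N%:Z)%:~R : rat) = (p^k)%N%:R by [].
have E : numq q * denq r = N * denq q.
  apply: (@intr_inj rat); rewrite !intrM numqE e natrX numqE hq; ring.
have E2 : (`|numq q| * `|denq r| = (p ^ k) * `|numq r| * `|denq q|)%N.
  by rewrite -!abszM E /N !abszM.
have hd : ~~ (p %| `|denq q|)%N.
  apply: contra hr => h; apply: dvdn_trans h _.
  have : (`|denq q| %| `|numq q| * `|denq r|)%N by rewrite E2 dvdn_mull.
  by rewrite Gauss_dvdr // coprime_sym coprime_num_den.
apply/andP; split => //.
have cop : coprime (p ^ k) `|denq r|.
  by apply: coprimeXl; rewrite prime_coprime.
have : (p ^ k %| `|numq q| * `|denq r|)%N by rewrite E2 -mulnA dvdn_mulr.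
by rewrite Gauss_dvdl.
Qed.

Lemma cong_mul p a b c d : prime p -> pint p a -> pint p d ->
  PZ p 1 (a - b) -> PZ p 1 (c - d) -> PZ p 1 (a * c - b * d).
Proof.
move=> pp ha hd h1 h2.
have -> : a * c - b * d = a * (c - d) + (a - b) * d by ring.
by apply: PZD => //; [apply: PZMl | apply: PZMr].
Qed.

Lemma cong_prod p I (r : seq I) (F G : I -> rat) : prime p ->
  (forall i, pint p (F i)) -> (forall i, pint p (G i)) ->
  (forall i, PZ p 1 (F i - G i)) ->
  PZ p 1 (\prod_(i <- r) F i - \prod_(i <- r) G i).
Proof.
move=> pp hF hG hFG; elim: r => [|x r IH]; first by rewrite !big_nil subrr; apply: PZ0.
rewrite !big_cons; apply: cong_mul => //.
by apply: pint_prod.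
Qed.

Lemma prod_ffact n j : \prod_(i < j) ((n%:R : rat) - i%:R) = (n ^_ j)%:R.
Proof.
elim: j => [|j IH]; first by rewrite big_ord0 ffactn0.
rewrite big_ord_recr /= IH ffactnSr natrM.
case: (leqP j n) => h; first by rewrite natrB.
by rewrite ffact_small // !mul0r.
Qed.

Lemma binq_nat n j : binq n%:R j = ('C(n, j))%:R.
Proof.
rewrite /binq prod_ffact -bin_ffact natrM mulfK //.
by rewrite pnatr_eq0 -lt0n fact_gt0.
Qed.

Lemma binq_cong p y z j : prime p -> (j < p)%N -> pint p y -> pint p z ->
  PZ p 1 (y - z) -> PZ p 1 (binq y j - binq z j).
Proof.
move=> pp hj hy hz hyz; rewrite /binq -mulrBl; apply: PZMr => //.
  exact: pintVfact.
apply: cong_prod => // i; try (apply: pintB => //; apply: pint_nat => //).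
by have -> : y - i%:R - (z - i%:R) = y - z by ring.
Qed.

Lemma pint_binq p y j : prime p -> (j < p)%N -> pint p y -> pint p (binq y j).
Proof.
move=> pp hj hy; rewrite /binq; apply: pintM => //; last exact: pintVfact.
by apply: pint_prod => // i _; apply: pintB => //; apply: pint_nat.
Qed.

Lemma wilson_gen p r : prime p -> (r < p)%N ->
  PZ p 1 (((p.-1 - r)`! * r`!)%:R - (-1) ^+ r.+1).
Proof.
move=> pp; elim: r => [|r IH] hr.
  rewrite subn0 fact0 muln1 expr1 opprK natr1; apply: PZ_nat => //.
  by rewrite -Wilson // prime_gt1.
have hr' : (r < p)%N by lia.
have IH' := IH hr'.
have E : (p.-1 - r = (p.-1 - r.+1).+1)%N by lia.
move: IH'; rewrite E factS !natrM => IH'.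
set X := ((p.-1 - r.+1)`!)%:R : rat.
set Y := (r`!)%:R : rat.
have E2 : ((p.-1 - r.+1).+1%:R : rat) = p%:R - (r.+1)%:R.
  by rewrite -natrB; [congr (_%:R); lia | lia].
rewrite E2 in IH'.
have -> : X * (r.+1%:R * Y) - (-1) ^+ r.+2 = p%:R * (X * Y) - ((p%:R - r.+1%:R) * X * Y - (-1) ^+ r.+1).
  by rewrite exprS; ring.
apply: PZB => //; apply: PZMr; last by rewrite -[p%:R]expr1; apply: PZ_pX.
by []. by apply: pintM => //; apply: pint_nat.
Qed.

Ltac pauto := repeat match goal with
 | |- is_true (prime _) => assumption
 | |- is_true (pint _ (_ + _)) => apply: pintD
 | |- is_true (pint _ (_ * _)) => apply: pintM
 | |- is_true (pint _ (- _)) => apply: pintN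
 | |- is_true (pint _ (_ ^+ _)) => apply: pintX
 | |- is_true (pint _ (_%:R)) => apply: pint_nat
 | |- is_true (pint _ 1) => apply: (pint_nat 1)
 | |- is_true (pint _ 0) => apply: (pint_nat 0)
 | |- is_true (pint _ (binq _ _)) => apply: pint_binq
 | |- is_true (pint _ _) => assumption
 | |- is_true (_ < _)%N => assumption
 end.

Lemma alt_pascal n (X : nat -> rat) :
  \sum_(i < n.+2) (-1) ^+ i * ('C(n.+1, i))%:R * X i =
  \sum_(i < n.+1) (-1) ^+ i * ('C(n, i))%:R * (X i - X i.+1).
Proof.
rewrite big_ord_recl /=.
rewrite (_ : \sum_(i < n.+1) _ = \sum_(i < n.+1) (- ((-1) ^+ i * ('C(n, i.+1))%:R * X i.+1))
   - \sum_(i < n.+1) ((-1) ^+ i * ('C(n, i))%:R * X i.+1)); last first.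
  rewrite -sumrB; apply: eq_bigr => i _; rewrite /bump /= binS natrD exprS; ring.
under [in RHS]eq_bigr => i _ do rewrite mulrBr.
rewrite sumrB addrA; congr (_ - _).
rewrite [in RHS]big_ord_recl /= expr0 bin0 mul1r.
rewrite bin0 !mul1r; congr (_ + _).
rewrite big_ord_recr /= bin_small // mulr0 mul0r oppr0 addr0.
by apply: eq_bigr => i _; rewrite /bump /= exprS; ring.
Qed.

Lemma alt_sum n : forall a r, (n <= r)%N ->
  \sum_(i < n.+1) (-1) ^+ i * ('C(n, i))%:R * ('C(a + i, r))%:R
  = (-1) ^+ n * ('C(a, r - n))%:R :> rat.
Proof.
elim: n => [|n IH] a r hr.
  by rewrite big_ord_recl big_ord0 addr0 /= expr0 bin0 !mul1r addn0 subn0.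
case: r hr => [//|r] hr.
rewrite (alt_pascal n (fun i => ('C(a + i, r.+1))%:R : rat)).
rewrite (_ : \sum_(i < n.+1) _ = - \sum_(i < n.+1) ((-1) ^+ i * ('C(n, i))%:R * ('C(a + i, r))%:R : rat)).
  by rewrite IH // subSS exprS; ring.
rewrite -sumrN; apply: eq_bigr => i _; rewrite addnS binS natrD; ring.
Qed.

Lemma bin_mul_rat a b : (b <= a)%N ->
  ('C(a, b))%:R = ((a`!)%:R / ((b`!)%:R * ((a - b)`!)%:R) : rat).
Proof.
move=> h; rewrite -(bin_fact h) !natrM mulfK //.
by rewrite mulf_neq0 // pnatr_eq0 -lt0n fact_gt0.
Qed.

Lemma fact_neq0 n : ((n`!)%:R : rat) != 0.
Proof. by rewrite pnatr_eq0 -lt0n fact_gt0. Qed.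

Lemma bin_swap m j k :
  ('C(m + j, j) * 'C(j, k))%:R = (('C(m + k, k) * 'C(m + j, m + k))%:R : rat).
Proof.
case: (ltnP j k) => h.
  rewrite (bin_small h) (@bin_small (m + j) (m + k)) ?muln0 //; lia.
rewrite !natrM !bin_mul_rat; try lia.
have -> : (m + j - j = m)%N by lia.
have -> : (m + k - k = m)%N by lia.
have -> : (m + j - (m + k) = j - k)%N by lia.
by field; rewrite !fact_neq0.
Qed.

Lemma inner_sum m k :
  \sum_(0 <= j < m.+1) (-1) ^+ j * ('C(m, j) * 'C(m + j, j))%:R * ('C(j, k))%:R
  = (-1) ^+ m * ('C(m, k) * 'C(m + k, k))%:R :> rat.
Proof.
rewrite big_mkord.
rewrite (_ : \sum_(j < m.+1) _ = ('C(m + k, k))%:R *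
  \sum_(j < m.+1) ((-1) ^+ j * ('C(m, j))%:R * ('C(m + j, m + k))%:R : rat)).
  by rewrite alt_sum ?leq_addr // (_ : (m + k - m = k)%N) ?natrM; [ring | lia].
rewrite mulr_sumr; apply: eq_bigr => j _.
have := bin_swap m j k; rewrite !natrM => E.
transitivity ((-1) ^+ j * ('C(m, j))%:R * (('C(m + j, j))%:R * ('C(j, k))%:R) : rat).
  by ring.
rewrite E; ring.
Qed.

Definition uu (m k : nat) : rat :=
  ((k`! * k`! * (m.-1 - k)`!)%N%:R) / (((m + k).+1)`!)%:R.

Definition EE (m j k : nat) : rat :=
  (-1) ^+ j * ('C(m, j) * 'C(m + j, j))%:R * ('C(j, k))%:R * uu m k.

Lemma uu_term m k : (k < m)%N ->
  uu m k * ('C(m, k) * 'C(m + k, k))%:R = ((m - k)%:R * (m + k + 1)%:R)^-1.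
Proof.
move=> hk; rewrite /uu (factS (m + k)) !natrM !bin_mul_rat; try lia.
have -> : (m + k - k = m)%N by lia.
have -> : (m - k = (m.-1 - k).+1)%N by lia.
rewrite (factS (m.-1 - k)) natrM addn1.
have h1 : ((m.-1 - k).+1%:R : rat) != 0 by rewrite pnatr_eq0.
have h2 : ((m + k).+1%:R : rat) != 0 by rewrite pnatr_eq0.
field; by rewrite !fact_neq0 -!natrD !(addrC 1) !natr1 !pnatr_eq0.
Qed.

Lemma harm_split m :
  \sum_(0 <= k < m) ((m - k)%:R * (m + k + 1)%:R)^-1 = harm (2 * m) / (2 * m + 1)%:R :> rat.
Proof.
have e1 : \sum_(0 <= k < m) ((m - k)%:R : rat)^-1 = \sum_(1 <= i < m.+1) (i%:R)^-1.
  rewrite big_add1 /= big_nat_rev /=; apply: eq_big_nat => k hk.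
  by congr (_%:R^-1); lia.
have e2 : \sum_(0 <= k < m) ((m + k + 1)%:R : rat)^-1 = \sum_(m.+1 <= i < (2 * m).+1) (i%:R)^-1.
  rewrite -[m.+1]add0n big_addn; have -> : ((2 * m).+1 - m.+1 = m)%N by lia.
  by apply: eq_big_nat => k hk; congr (_%:R^-1); lia.
rewrite /harm [in RHS](big_cat_nat _ (n := m.+1)) /=; try lia.
rewrite -e1 -e2 -big_split mulr_suml /=; apply: eq_big_nat => k hk.
have h1 : ((m - k)%:R : rat) != 0 by rewrite pnatr_eq0; lia.
have h2 : ((m + k + 1)%:R : rat) != 0 by rewrite pnatr_eq0; lia.
have h3 : ((2 * m + 1)%:R : rat) != 0 by rewrite pnatr_eq0; lia.
have e : ((2 * m + 1)%:R : rat) = (m - k)%:R + (m + k + 1)%:R.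
  by rewrite -natrD; congr (_%:R); lia.
rewrite e; field; rewrite -!natrD !natr1 -!natrD !pnatr_eq0; apply/and3P; split; apply/eqP; lia.
Qed.

Lemma stepB m :
  \sum_(0 <= j < m.+1) \sum_(0 <= k < m) EE m j k
  = (-1) ^+ m * harm (2 * m) / (2 * m + 1)%:R.
Proof.
rewrite exchange_big_nat /=.
rewrite (eq_big_nat _ _ (F2 := fun k => (-1) ^+ m * ((m - k)%:R * (m + k + 1)%:R)^-1)).
  by rewrite -mulr_sumr harm_split mulrA.
move=> k hk; rewrite /EE -mulr_suml inner_sum -mulrA mulrC -mulrA.
rewrite mulrA [_ * uu m k]mulrC uu_term; last by lia.
by rewrite mulrC.
Qed.

Lemma bin_pm1 p j : prime p -> (j < p)%N -> PZ p 1 (('C(p.-1, j))%:R - (-1) ^+ j).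
Proof.
move=> pp; elim: j => [|j IH] hj; first by rewrite bin0 expr0 subrr; apply: PZ0.
have hp : p = (p.-1).+1 by rewrite prednK // prime_gt0.
have E : ('C(p.-1, j.+1))%:R - (-1) ^+ j.+1 =
   ('C(p, j.+1))%:R - (('C(p.-1, j))%:R - (-1) ^+ j) :> rat.
  by rewrite {2}hp binS natrD exprS; ring.
rewrite E; apply: PZB => //; last by apply: IH; lia.
by apply: PZ_nat => //; apply: prime_dvd_bin => //; lia.
Qed.

Lemma stepA_a p m y t j : prime p -> (m < p)%N -> (j <= m)%N -> (m + j < p)%N ->
  pint p t -> y = m%:R + p%:R * t ->
  pint p (binq y j * binq (y + j%:R) j) /\
  PZ p 1 (binq y j * binq (y + j%:R) j - ('C(m, j) * 'C(m + j, j))%:R).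
Proof.
move=> pp hm hj hmj ht hy.
have hpy : pint p y by rewrite hy; pauto.
have hpy2 : pint p (y + j%:R) by pauto.
have hjp : (j < p)%N by lia.
split; first by pauto.
rewrite natrM -!binq_nat; apply: cong_mul => //; pauto.
  apply: binq_cong => //; pauto.
  by rewrite hy addrC addKr -[p%:R]expr1; apply: PZMr => //; apply: PZ_pX.
apply: binq_cong => //; pauto.
rewrite hy natrD (_ : _ - _ = p%:R * t); last by ring.
by rewrite -[p%:R]expr1; apply: PZMr => //; apply: PZ_pX.
Qed.

Lemma pint_sum_nat p a b (F : nat -> rat) : prime p ->
  (forall i, (a <= i < b)%N -> pint p (F i)) -> pint p (\sum_(a <= i < b) F i).
Proof.
move=> pp h; rewrite big_seq; apply: pint_sum => // i.
by rewrite mem_index_iota; apply: h.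
Qed.

Lemma PZ_sum_nat p k a b (F : nat -> rat) : prime p ->
  (forall i, (a <= i < b)%N -> PZ p k (F i)) -> PZ p k (\sum_(a <= i < b) F i).
Proof.
move=> pp h; rewrite big_seq; apply: PZ_sum => // i.
by rewrite mem_index_iota; apply: h.
Qed.

Definition cc p j k n : rat :=
  (n.+1)%:R^-1 * ('C(n, j))%:R * (binz j n k)%:R * ('C(p.-1, n))%:R.

Lemma cc_pint p j k n : prime p -> n != p.-1 -> pint p (cc p j k n).
Proof.
move=> pp hn; rewrite /cc.
case: (ltnP n.+1 p) => h.
  pauto; apply: pintV_nat; apply/negP => /dvdn_leq => /(_ isT); lia.
have h2 : (p.-1 < n)%N by lia.
rewrite (@bin_small p.-1 n) // mulr0; apply: (pint_nat 0 pp).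
Qed.

Lemma cc_top p j k : prime p -> (k < p)%N ->
  cc p j k p.-1 = p%:R^-1 * ('C(p.-1, j))%:R * ('C(j, p.-1 - k))%:R.
Proof.
move=> pp hk; rewrite /cc binn mulr1 prednK ?prime_gt0 // /binz.
have -> : (k <= p.-1)%N by lia.
done.
Qed.

Lemma stepA_c p j k : prime p -> (k < p)%N ->
  pint p (\sum_(0 <= n < (j + k).+1) cc p j k n
          - p%:R^-1 * ('C(p.-1, j))%:R * ('C(j, p.-1 - k))%:R).
Proof.
move=> pp hk.
case: (ltnP p.-1 (j + k).+1) => h.
  rewrite (big_cat_nat _ (n := p.-1)) //=; last by lia.
  rewrite [\sum_(p.-1 <= i < _) _]big_ltn //= cc_top //.
  rewrite (_ : forall a b c : rat, a + (b + c) - b = a + c); last by move=> *; ring.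
  apply: pintD => //; apply: pint_sum_nat => // i hi; apply: cc_pint => //; lia.
rewrite (@bin_small j (p.-1 - k)); last by lia.
rewrite mulr0n mulr0 subr0; apply: pint_sum_nat => // i hi; apply: cc_pint => //; lia.
Qed.

Lemma Q1_val m : \prod_(0 <= i < m) ((m%:R : rat) - i%:R) = (m`!)%:R.
Proof. by rewrite big_mkord prod_ffact ffactnn. Qed.

Lemma Q2_val m n : \prod_(m.+1 <= i < m.+1 + n) ((m%:R : rat) - i%:R) = (-1) ^+ n * (n`!)%:R.
Proof.
elim: n => [|n IH]; first by rewrite addn0 big_geq // expr0 fact0 mulr1.
rewrite addnS big_nat_recr /=; last by lia.
rewrite IH factS natrM exprS.
have -> : (m%:R : rat) - (m.+1 + n)%:R = - (n.+1)%:R.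
  by rewrite natrD -addn1 natrD -[(n.+1)%:R]natr1; ring.
ring.
Qed.

Lemma Q3_val m n : (\prod_(0 <= i < n) ((m%:R : rat) + (i.+1)%:R)) * (m`!)%:R = ((m + n)`!)%:R.
Proof.
elim: n => [|n IH]; first by rewrite big_geq // mul1r addn0.
rewrite big_nat_recr //= addnS factS natrM -IH -addn1 !natrD; ring.
Qed.

Lemma Q4_val p m n : (m <= p)%N ->
  \prod_(p - m <= i < p - m + n) ((m%:R : rat) + (i.+1)%:R - p%:R) = (n`!)%:R.
Proof.
move=> hm; elim: n => [|n IH]; first by rewrite addn0 big_geq.
rewrite addnS big_nat_recr /=; last by lia.
rewrite IH factS natrM.
have -> : (m%:R : rat) + (p - m + n).+1%:R - p%:R = (n.+1)%:R.
  rewrite -natrD -natrB; last by lia.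
  by congr (_%:R); lia.
ring.
Qed.

Lemma sgn_sq n : ((-1) ^+ n * (-1) ^+ n : rat) = 1.
Proof. by rewrite -exprD addnn -mul2n exprM sqrrN expr1n. Qed.

Lemma key_sign p (s s1 s2 XY F KL : rat) : prime p ->
  s * s2 = -1 -> s1 * s1 = 1 ->
  PZ p 1 (XY - s2) -> PZ p 1 (F + 1) -> PZ p 1 (KL - s1) ->
  pint p s -> pint p s1 ->
  PZ p 1 (s * XY * F - KL * KL).
Proof.
move=> pp hs hs1 [r1 [h1 e1]] [r2 [h2 e2]] [r3 [h3 e3]] ps ps1.
rewrite expr1 in e1 e2 e3.
have -> : XY = s2 + p%:R * r1 by rewrite -e1; ring.
have -> : F = -1 + p%:R * r2 by rewrite -e2; ring.
have -> : KL = s1 + p%:R * r3 by rewrite -e3; ring.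
have -> : s * (s2 + p%:R * r1) * (-1 + p%:R * r2) - (s1 + p%:R * r3) * (s1 + p%:R * r3)
  = (s * s2 + 1) * (-1 + p%:R * r2) + (1 - s1 * s1)
    + p%:R * (- r2 + s * r1 * (p%:R * r2 - 1) - 2%:R * s1 * r3 - p%:R * r3 * r3).
  by ring.
rewrite hs hs1 addNr subrr mul0r !add0r.
exists (- r2 + s * r1 * (p%:R * r2 - 1) - 2%:R * s1 * r3 - p%:R * r3 * r3).
by rewrite expr1; split => //; pauto.
Qed.

Lemma sgn_pint p n : prime p -> pint p ((-1) ^+ n : rat).
Proof. by move=> pp; pauto. Qed.

Lemma w0_cong p m k : prime p -> odd p -> (2 * m + 3 <= p)%N -> (p - m <= k)%N -> (k < p)%N ->
  PZ p 1 ((m`!)%:R * ((-1) ^+ (k - m.+1) * ((k - m.+1)`!)%:R) *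
          (((p.-1)`!)%:R / (m`!)%:R) * (((k - (p - m))`!)%:R) / ((k`!)%:R * (k`!)%:R)
          - uu m (p.-1 - k)).
Proof.
move=> pp op hm hk1 hk2.
set q := (p.-1 - k)%N.
have w1 := wilson_gen pp (_ : (q < p)%N).
have w2 := wilson_gen pp (_ : ((m + q).+1 < p)%N).
have w3 := wilson_gen pp (_ : (0 < p)%N).
have {w1}w1 := w1 ltac:(rewrite /q; lia).
have {w2}w2 := w2 ltac:(rewrite /q; lia).
have {w3}w3 := w3 ltac:(lia).
have e1 : (p.-1 - q = k)%N by rewrite /q; lia.
have e2 : (p.-1 - (m + q).+1 = k - m.+1)%N by rewrite /q; lia.
have e3 : (k - (p - m) = m.-1 - q)%N by rewrite /q; lia.
rewrite e1 in w1; rewrite e2 in w2; rewrite subn0 fact0 muln1 expr1 opprK in w3.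
rewrite e3 /uu.
set Y := (((m + q).+1)`!) in w2 *.
have hY : (Y%:R : rat) != 0 by apply: fact_neq0.
have hYp : pint p ((Y%:R : rat)^-1) by apply: pintVfact => //; lia.
clearbody Y.
rewrite !natrM in w1 w2 *.
set K := ((k`!)%:R : rat).
set L := ((q`!)%:R : rat).
set X := (((k - m.+1)`!)%:R : rat).
set F := (((p.-1)`!)%:R : rat).
set M := (((m.-1 - q)`!)%:R : rat).
set s := ((-1) ^+ (k - m.+1) : rat).
have hK : K != 0 by apply: fact_neq0.
have hm0 : ((m`!)%:R : rat) != 0 by apply: fact_neq0.
have -> : (m`!)%:R * (s * X) * (F / (m`!)%:R) * M / (K * K) - L * L * M / Y%:R
   = (M * K^-1 * K^-1 * (Y%:R)^-1) * (s * (X * Y%:R) * F - (K * L) * (K * L)).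
  by field; rewrite hK hY hm0.
apply: PZMl => //.
  rewrite /M; pauto; apply: pintVfact => //; lia.
apply: (key_sign pp _ _ w2 w3 w1).
- rewrite /s -exprD; have -> : (k - m.+1 + (m + q).+2 = p)%N by rewrite /q; lia.
  by rewrite -signr_odd op expr1.
- exact: sgn_sq.
- exact: sgn_pint.
- exact: sgn_pint.
Qed.

Lemma cong4 p a1 a2 a3 a4 b1 b2 b3 b4 : prime p ->
  pint p a1 -> pint p a2 -> pint p a3 -> pint p b2 -> pint p b3 -> pint p b4 ->
  PZ p 1 (a1 - b1) -> PZ p 1 (a2 - b2) -> PZ p 1 (a3 - b3) -> PZ p 1 (a4 - b4) ->
  PZ p 1 (a1 * a2 * a3 * a4 - b1 * b2 * b3 * b4).
Proof.
move=> pp ha1 ha2 ha3 hb2 hb3 hb4 h1 h2 h3 h4.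
apply: cong_mul => //; first by pauto.
apply: cong_mul => //; first by pauto.
exact: cong_mul.
Qed.

Lemma PZ1_pt p t : prime p -> pint p t -> PZ p 1 (p%:R * t).
Proof. by move=> pp ht; exists t; rewrite expr1. Qed.

Lemma stepA_b p m y t k : prime p -> odd p -> (2 * m + 3 <= p)%N ->
  (p - m <= k)%N -> (k < p)%N -> pint p t -> y = m%:R + p%:R * t ->
  exists W, [/\ pint p W, PZ p 1 (W - uu m (p.-1 - k)) &
    binq y k * binq (y + k%:R) k = p%:R ^+ 2 * (t * (t + 1)) * W].
Proof.
move=> pp op hm hk1 hk2 ht hy.
have hpy : pint p y by rewrite hy; pauto.
set a := (p - m).-1.
have ha : a.+1 = (p - m)%N by rewrite /a prednK //; lia.
have E1 : \prod_(i < k) (y - i%:R) = (\prod_(0 <= i < m) (y - i%:R)) * (y - m%:R) *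
     \prod_(m.+1 <= i < k) (y - i%:R).
  rewrite -(big_mkord xpredT (fun i => y - i%:R)) (big_cat_nat _ (n := m)) //=; last by lia.
  by rewrite [\prod_(m <= i < k) _]big_ltn ?mulrA //; lia.
have E2 : \prod_(i < k) (y + k%:R - i%:R) = (\prod_(0 <= i < a) (y + (i.+1)%:R)) *
     (y + (a.+1)%:R) * \prod_(a.+1 <= i < k) (y + (i.+1)%:R).
  rewrite -(big_mkord xpredT (fun i => y + k%:R - i%:R)) big_nat_rev /=.
  rewrite (eq_big_nat _ _ (F2 := fun i => y + (i.+1)%:R)); last first.
    move=> i hi; rewrite add0n -addrA; congr (_ + _).
    by rewrite -natrB; [congr (_%:R); lia | lia].
  rewrite (big_cat_nat _ (n := a)) //=; last by lia.
  by rewrite [\prod_(a <= i < k) _]big_ltn ?mulrA //; lia.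
set P1 := \prod_(0 <= i < m) (y - i%:R) in E1 *.
set P2 := \prod_(m.+1 <= i < k) (y - i%:R) in E1 *.
set P3 := \prod_(0 <= i < a) (y + (i.+1)%:R) in E2 *.
set P4 := \prod_(a.+1 <= i < k) (y + (i.+1)%:R) in E2 *.
set K := ((k`!)%:R : rat).
exists (P1 * P2 * P3 * P4 * (K^-1 * K^-1)); split.
- pauto; rewrite ?/P1 ?/P2 ?/P3 ?/P4; try (apply: pint_prod => // i _; pauto).
  all: try apply: pintVfact => //.
- set Q1 := \prod_(0 <= i < m) ((m%:R : rat) - i%:R).
  set Q2 := \prod_(m.+1 <= i < k) ((m%:R : rat) - i%:R).
  set Q3 := \prod_(0 <= i < a) ((m%:R : rat) + (i.+1)%:R).
  set Q4 := \prod_(a.+1 <= i < k) ((m%:R : rat) + (i.+1)%:R - p%:R).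
  have c1 : PZ p 1 (P1 * P2 * P3 * P4 - Q1 * Q2 * Q3 * Q4).
    apply: cong4 => //; rewrite ?/P1 ?/P2 ?/P3 ?/P4 ?/Q2 ?/Q3 ?/Q4;
      try (apply: pint_prod => // i _; pauto).
    + apply: cong_prod => // i; pauto.
      by rewrite hy (_ : _ - _ = p%:R * t); [apply: PZ1_pt | ring].
    + apply: cong_prod => // i; pauto.
      by rewrite hy (_ : _ - _ = p%:R * t); [apply: PZ1_pt | ring].
    + apply: cong_prod => // i; pauto.
      by rewrite hy (_ : _ - _ = p%:R * t); [apply: PZ1_pt | ring].
    + apply: cong_prod => // i; pauto.
      by rewrite hy (_ : _ - _ = p%:R * (t + 1)); [apply: PZ1_pt; pauto | ring].
  have vQ1 : Q1 = (m`!)%:R by apply: Q1_val.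
  have vQ2 : Q2 = (-1) ^+ (k - m.+1) * (((k - m.+1)`!)%:R).
    by have := Q2_val m (k - m.+1); rewrite subnKC //; lia.
  have vQ3 : Q3 = ((p.-1)`!)%:R / (m`!)%:R.
    have := Q3_val m a; rewrite (_ : (m + a = p.-1)%N); last by rewrite /a; lia.
    by move=> <-; rewrite mulfK // fact_neq0.
  have vQ4 : Q4 = ((k - (p - m))`!)%:R.
    by rewrite /Q4 ha; have := @Q4_val p m (k - (p - m)) ltac:(lia); rewrite subnKC //; lia.
  have w := w0_cong pp op hm hk1 hk2.
  rewrite -vQ3 -vQ4 -vQ1 -vQ2 -/K invfM in w.
  have -> : P1 * P2 * P3 * P4 * (K^-1 * K^-1) - uu m (p.-1 - k) =
     (P1 * P2 * P3 * P4 - Q1 * Q2 * Q3 * Q4) * (K^-1 * K^-1) +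
     (Q1 * Q2 * Q3 * Q4 * (K^-1 * K^-1) - uu m (p.-1 - k)) by ring.
  apply: PZD => //; first by apply: PZMr => //; pauto; apply: pintVfact.
- rewrite /binq E1 E2 hy.
  have -> : m%:R + p%:R * t - m%:R = p%:R * t by ring.
  have -> : (a.+1%:R : rat) = p%:R - m%:R by rewrite ha natrB //; lia.
  rewrite -/K; ring.
Qed.

Lemma termA p m y t j k : prime p -> odd p -> (2 * m + 3 <= p)%N ->
  (j <= m)%N -> (p - m <= k)%N -> (k < p)%N -> pint p t -> y = m%:R + p%:R * t ->
  PZ p 3 (p%:R * (binq y j * binq (y + j%:R) j * binq y k * binq (y + k%:R) k *
      \sum_(0 <= n < (j + k).+1) cc p j k n)
    - p%:R ^+ 2 * (t * (t + 1)) * EE m j (p.-1 - k)).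
Proof.
move=> pp op hm hj hk1 hk2 ht hy.
have [hA cA] := stepA_a pp (ltac:(lia) : (m < p)%N) hj (ltac:(lia) : (m + j < p)%N) ht hy.
have [W [hW cW eB]] := stepA_b pp op hm hk1 hk2 ht hy.
have hc := @stepA_c p j k pp hk2.
have hd := @bin_pm1 p j pp ltac:(lia).
set q := (p.-1 - k)%N in cW hc *.
set A := binq y j * binq (y + j%:R) j in hA cA *.
set Sn := \sum_(0 <= n < (j + k).+1) cc p j k n in hc *.
set R := Sn - _ in hc.
have hp0 : (p%:R : rat) != 0 by rewrite pnatr_eq0; case: eqP pp => // ->.
have eS : Sn = p%:R^-1 * ('C(p.-1, j))%:R * ('C(j, q))%:R + R by rewrite /R; ring.
have -> : A * binq y k * binq (y + k%:R) k * Sn = A * (binq y k * binq (y + k%:R) k) * Sn by ring.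
rewrite eB eS /EE.
set Cb := ('C(p.-1, j))%:R : rat.
set Cj := ('C(j, q))%:R : rat.
set a := ('C(m, j) * 'C(m + j, j))%:R : rat.
set tau := t * (t + 1).
have -> : p%:R * (A * (p%:R ^+ 2 * tau * W) * (p%:R^-1 * Cb * Cj + R)) -
    p%:R ^+ 2 * tau * ((-1) ^+ j * a * Cj * uu m q)
  = p%:R ^+ 2 * (tau * (Cj * (A * W * Cb - a * uu m q * (-1) ^+ j)))
    + p%:R ^+ 3 * (tau * A * W * R).
  by field.
have hu : pint p (uu m q) by rewrite /uu; pauto; apply: pintVfact => //; rewrite /q; lia.
apply: PZD => //; last by apply: PZMr => //; [rewrite /tau; pauto | apply: PZ_pX].
rewrite (_ : 3 = 2 + 1)%N //; apply: PZM => //; first exact: PZ_pX.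
apply: PZMl => //; first by rewrite /tau; pauto.
apply: PZMl => //; first by rewrite /Cj; pauto.
apply: cong_mul => //; first by pauto.
  exact: sgn_pint.
exact: cong_mul.
Qed.

Lemma reindex (F : nat -> rat) p m : (m <= p)%N ->
  \sum_(p - m <= k < p) F (p.-1 - k)%N = \sum_(0 <= k < m) F k.
Proof.
elim: m => [|m IH] hm; first by rewrite subn0 !big_geq.
rewrite big_ltn; last by lia.
rewrite big_nat_recr //= addrC -IH; last by lia.
have -> : (p - m.+1).+1 = (p - m)%N by lia.
by have -> : (p.-1 - (p - m.+1) = m)%N by lia.
Qed.

Lemma core p m y t : prime p -> odd p -> (2 * m + 3 <= p)%N -> pint p t ->
  y = m%:R + p%:R * t -> PZ p 3 (lhs27 p m y - rhs27 p m y).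
Proof.
move=> pp op hm ht hy.
have hp0 : (p%:R : rat) != 0 by rewrite pnatr_eq0; case: eqP pp => // ->.
have -> : rhs27 p m y = p%:R ^+ 2 * (t * (t + 1)) *
    \sum_(0 <= j < m.+1) \sum_(0 <= k < m) EE m j k.
  rewrite stepB /rhs27 /=.
  have -> : (y - m%:R) / p%:R = t by rewrite hy; field.
  ring.
have -> : \sum_(0 <= j < m.+1) \sum_(0 <= k < m) EE m j k =
    \sum_(0 <= j < m.+1) \sum_(p - m <= k < p) EE m j (p.-1 - k)%N.
  by apply: eq_bigr => j _; rewrite reindex //; lia.
rewrite /lhs27 mulr_sumr mulr_sumr -sumrB.
apply: PZ_sum_nat => // j hj.
rewrite mulr_sumr mulr_sumr -sumrB.
apply: PZ_sum_nat => // k hk.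
by apply: termA => //; lia.
Qed.

Unset Implicit Arguments.

Theorem lemma2p7 (p : nat) (x : nat -> rat) (m : nat) :
  prime p -> odd p -> padic_int p x ->
  (m < p)%N -> padic_in_pZ p 1 (fun n => x n - m%:R) ->
  (m < (p.-1)./2)%N ->
  padic_in_pZ p 3 (fun n => lhs27 p m (x n) - rhs27 p m (x n)).
Proof.
move=> pp op _ _ [N hN] hm.
have hm3 : (2 * m + 3 <= p)%N.
  have h2 : ((p.-1)./2).*2 = p.-1.
    have hodd : odd p.-1 = false.
      by move: op; rewrite -[p in odd p](prednK (prime_gt0 pp)) /= => /negbTE.
    by rewrite halfK hodd subn0.
  rewrite -muln2 in h2; lia.
exists N => n hn.
have [r [hr e]] := inpZ_PZ pp (hN n hn).
apply: PZ_inpZ => //; apply: (core pp op hm3 hr).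
by rewrite expr1 in e; rewrite -e; ring.
Qed.
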